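(* Assume (A2). Let $\{\alpha_k\},\{\beta_k\}$ be nonnegative, nonincreasing step sizes and $\mathcal K^*$ as in the context. Then for all $k\ge\mathcal K^*$, writing $\tau=\tau(\alpha_k)$ and $a=\alpha_{k;\tau(\alpha_k)}$, $$\|\hat Z_k-\hat Z_{k-\tau}\|\le\frac{(8\lambda_1+1)^2}{8\lambda_1^2}a\|\hat Z_{k-\tau}\|+\frac{(8\lambda_1+1)^2(2B+\|Y^*\|)}{8\lambda_1^3}a,$$ $$\|\hat Z_k-\hat Z_{k-\tau}\|\le\frac{3(8\lambda_1+1)^2}{8\lambda_1^2}a\|\hat Z_k\|+\frac{3(8\lambda_1+1)^2(2B+\|Y^*\|)}{8\lambda_1^3}a,$$ $$\|\hat Z_k-\hat Z_{k-\tau}\|^2\le\frac{9(8\lambda_1+1)^4}{32\lambda_1^4}a^2\|\hat Z_k\|^2+\frac{9(8\lambda_1+1)^4(2B+\|Y^*\|)^2}{32\lambda_1^6}a^2.$$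
   Context: Let $n\ge1$; $\|\cdot\|$ is the Euclidean norm / spectral norm. Let $\{\xi_k\}_{k\ge0}$ be a Markov chain with state space $\mathcal S$, and for $i,j\in\{1,2\}$ let $A_{ij}(\xi)\in\mathbb R^{n\times n}$, $b_i(\xi)\in\mathbb R^n$. The linear two-time-scale stochastic approximation, from arbitrary $X_0,Y_0$, is $X_{k+1}=X_k-\alpha_k(A_{11}(\xi_k)X_k+A_{12}(\xi_k)Y_k-b_1(\xi_k))$, $Y_{k+1}=Y_k-\beta_k(A_{21}(\xi_k)X_k+A_{22}(\xi_k)Y_k-b_2(\xi_k))$. Standing setting: the limits $\bar A_{ij}=\lim_k\mathbb E[A_{ij}(\xi_k)]$, $\bar b_i=\lim_k\mathbb E[b_i(\xi_k)]$ exist; $x^T\bar A_{11}x>0$ and $x^T\Delta x>0$ for $x\neq0$, where $\Delta=\bar A_{22}-\bar A_{21}\bar A_{11}^{-1}\bar A_{12}$; for $\alpha>0$, $\tau(\alpha)$ is a mixing time: $\|\mathbb E[A_{ij}(\xi_k)\mid\xi_0=\xi]-\bar A_{ij}\|\le\alpha$, $\|\mathbb E[b_i(\xi_k)\mid\xi_0=\xi]-\bar b_i\|\le\alpha$ for all $i,j,\xi$ and $k\ge\tau(\alpha)$, with $\tau(\alpha)=C\log(1/\alpha)$. (A2): there is $B>0$ with $\|b_i(\xi)\|\le B$ and $\|A_{ij}(\xi)\|\le1/4$ for all $i,j,\xi$. Notation: $(X^*,Y^* )$ solves $\bar A_{11}X^*+\bar A_{12}Y^*=\bar b_1$, $\bar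 A_{21}X^*+\bar A_{22}Y^*=\bar b_2$; $\hat X_k=X_k-\bar A_{11}^{-1}(\bar b_1-\bar A_{12}Y_k)$, $\hat Y_k=Y_k-Y^*$, $\hat Z_k=[\hat X_k^T,\hat Y_k^T]^T$; $\lambda_1$ is the smallest singular value of $\bar A_{11}$; $\alpha_{k;\tau(\alpha_k)}=\sum_{t=k-\tau(\alpha_k)}^{k-1}\alpha_t$. $\mathcal K^*$ is a positive integer with $\sum_{t=k-\tau(\alpha_k)}^{k}\alpha_t\le\tau(\alpha_k)\alpha_{k-\tau(\alpha_k)}\le\log2$ for all $k\ge\mathcal K^*$. *)

(* Defs.v *)
From HB Require Import structures.
From mathcomp Require Import all_boot all_order all_algebra.
From mathcomp Require Import all_classical all_reals all_analysis.
Set Implicit Arguments. Unset Strict Implicit. Unset Printing Implicit Defensive.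
Import Order.TTheory GRing.Theory Num.Theory.
Local Open Scope ring_scope.
Local Open Scope classical_set_scope.

Definition vnorm (R : realType) (m : nat) (v : 'cV[R]_m) : R :=
  Num.sqrt (\sum_(i < m) v i ord0 ^+ 2).

Definition mxnorm (R : realType) (n : nat) (M : 'M[R]_n) : R :=
  sup [set vnorm (M *m x) | x in [set x : 'cV[R]_n | vnorm x <= 1]].

Definition smin (R : realType) (n : nat) (M : 'M[R]_n) : R :=
  inf [set vnorm (M *m x) | x in [set x : 'cV[R]_n | vnorm x = 1]].

Definition posdef (R : realType) (n : nat) (M : 'M[R]_n) : Prop :=
  forall x : 'cV[R]_n, x != 0 -> 0 < (x^T *m M *m x) 0 0.

Definition alpha_win (R : realType) (alpha : nat -> R) (k tau : nat) : R :=
  \sum_(k - tau <= t < k) alpha t.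

(* Main.v *)
Require Import Defs.
From HB Require Import structures.
From mathcomp Require Import all_boot all_order all_algebra.
From mathcomp Require Import all_classical all_reals all_analysis.
From mathcomp Require Import ring lra.
Import Order.TTheory GRing.Theory Num.Theory.
Local Open Scope ring_scope.
Local Open Scope classical_set_scope.
Set Implicit Arguments. Unset Strict Implicit.
Section LA.
Variable R : realType.
Implicit Types (m : nat).

Lemma cs m (f g : 'I_m -> R) :
  (\sum_i f i * g i) ^+ 2 <= (\sum_i f i ^+ 2) * (\sum_i g i ^+ 2).
Proof.
set P := \sum_i f i ^+ 2; set Q := \sum_i g i ^+ 2; set D := \sum_i f i * g i.
have Q0 : 0 <= Q by apply: sumr_ge0 => i _; exact: sqr_ge0.
have H : 0 <= \sum_i (f i * Q - g i * D) ^+ 2 by apply: sumr_ge0 => i _; exact: sqr_ge0.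
have E : \sum_i (f i * Q - g i * D) ^+ 2 = Q * (P * Q - D ^+ 2).
  rewrite (eq_bigr (fun i => f i ^+ 2 * (Q ^+ 2) + (f i * g i) * (- 2 * Q * D) + g i ^+ 2 * D ^+ 2)); last by move=> i _; ring.
  rewrite !big_split /= -!mulr_suml -/P -/Q -/D; ring.
rewrite E in H.
have [Qp|] := ltrP 0 Q.
  by rewrite pmulr_rge0 // subr_ge0 in H.
move=> Qle; have Qe : Q = 0 by apply/eqP; rewrite eq_le Qle Q0.
have g0 : forall i, g i = 0.
  move=> i; apply/eqP; rewrite -(sqrf_eq0 (g i)); apply/eqP.
  by apply: (psumr_eq0P _ Qe) => // j _; exact: sqr_ge0.
rewrite /D big1 ?expr0n ?Qe ?mulr0 // => i _; by rewrite g0 mulr0.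
Qed.

Definition dot m (u v : 'cV[R]_m) := \sum_i u i ord0 * v i ord0.
Arguments dot {m}.

Lemma vnorm_ge0 m (v : 'cV[R]_m) : 0 <= vnorm v.
Proof. exact: sqrtr_ge0. Qed.

Lemma ss_ge0 m (v : 'cV[R]_m) : 0 <= \sum_i v i ord0 ^+ 2.
Proof. by apply: sumr_ge0 => i _; exact: sqr_ge0. Qed.

Lemma vnorm_sqr m (v : 'cV[R]_m) : vnorm v ^+ 2 = \sum_i v i ord0 ^+ 2.
Proof. by rewrite /vnorm sqr_sqrtr // ss_ge0. Qed.

Lemma dot_le m (u v : 'cV[R]_m) : dot u v <= vnorm u * vnorm v.
Proof.
rewrite /vnorm -sqrtrM ?ss_ge0 //.
apply: le_trans (ler_norm _) _.
rewrite -sqrtr_sqr ler_sqrt; last by apply: mulr_ge0; exact: ss_ge0.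
exact: cs.
Qed.

Lemma dot_self m (u : 'cV[R]_m) : dot u u = vnorm u ^+ 2.
Proof. by rewrite vnorm_sqr /dot; apply: eq_bigr => i _; rewrite expr2. Qed.

Lemma vnormD m (u v : 'cV[R]_m) : vnorm (u + v) <= vnorm u + vnorm v.
Proof.
have h : vnorm (u + v) ^+ 2 <= (vnorm u + vnorm v) ^+ 2.
  rewrite vnorm_sqr sqrrD !vnorm_sqr.
  rewrite (eq_bigr (fun i => u i ord0 ^+ 2 + (u i ord0 * v i ord0) *+ 2 + v i ord0 ^+ 2)); last first.
    by move=> i _; rewrite !mxE sqrrD.
  rewrite !big_split /=.
  have := dot_le u v; rewrite /dot => ?; lra.
rewrite -(ler_pXn2r (n:=2)) // ?nnegrE ?addr_ge0 ?vnorm_ge0 //.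
Qed.

Lemma vnormZ m a (v : 'cV[R]_m) : vnorm (a *: v) = `|a| * vnorm v.
Proof.
rewrite /vnorm (eq_bigr (fun i => a ^+ 2 * v i ord0 ^+ 2)); last by move=> i _; rewrite !mxE exprMn.
by rewrite -mulr_sumr sqrtrM ?sqr_ge0 // sqrtr_sqr.
Qed.

Lemma vnormN m (v : 'cV[R]_m) : vnorm (- v) = vnorm v.
Proof. by rewrite -scaleN1r vnormZ normrN1 mul1r. Qed.

Lemma vnormB m (u v : 'cV[R]_m) : vnorm (u - v) <= vnorm u + vnorm v.
Proof. by rewrite -(vnormN v); exact: vnormD. Qed.

Lemma vnormBC m (u v : 'cV[R]_m) : vnorm (u - v) = vnorm (v - u).
Proof. by rewrite -vnormN opprB. Qed.

Lemma vnorm_col m (u v : 'cV[R]_m) :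
  vnorm (col_mx u v) ^+ 2 = vnorm u ^+ 2 + vnorm v ^+ 2.
Proof.
by rewrite !vnorm_sqr big_split_ord /=; congr (_ + _); apply: eq_bigr => i _;
  rewrite ?col_mxEu ?col_mxEd.
Qed.

Lemma vnorm_col_le m (u v : 'cV[R]_m) : vnorm (col_mx u v) <= vnorm u + vnorm v.
Proof.
rewrite -(ler_pXn2r (n:=2)) // ?nnegrE ?addr_ge0 ?vnorm_ge0 //.
rewrite vnorm_col sqrrD; have := vnorm_ge0 u; have := vnorm_ge0 v; nra.
Qed.

Lemma vnorm_col_u m (u v : 'cV[R]_m) : vnorm u <= vnorm (col_mx u v).
Proof.
rewrite -(ler_pXn2r (n:=2)) // ?nnegrE ?vnorm_ge0 //.
rewrite vnorm_col lerDl; exact: sqr_ge0.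
Qed.

Lemma vnorm_col_d m (u v : 'cV[R]_m) : vnorm v <= vnorm (col_mx u v).
Proof.
rewrite -(ler_pXn2r (n:=2)) // ?nnegrE ?vnorm_ge0 //.
rewrite vnorm_col lerDr; exact: sqr_ge0.
Qed.

Lemma entry_le m (v : 'cV[R]_m) i : `|v i ord0| <= vnorm v.
Proof.
rewrite -sqrtr_sqr ler_sqrt ?ss_ge0 //.
rewrite (bigD1 i) //= lerDl; apply: sumr_ge0 => j _; exact: sqr_ge0.
Qed.

Definition frob m (A : 'M[R]_m) := Num.sqrt (\sum_i \sum_j A i j ^+ 2).
Arguments frob {m}.

Lemma mx_bound m (A : 'M[R]_m) x : vnorm (A *m x) <= frob A * vnorm x.
Proof.
rewrite /frob /vnorm -sqrtrM; last by apply: sumr_ge0 => i _; apply: sumr_ge0 => j _; exact: sqr_ge0.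
rewrite ler_sqrt; last by apply: mulr_ge0; [apply: sumr_ge0 => i _; apply: sumr_ge0 => j _; exact: sqr_ge0|exact: ss_ge0].
rewrite mulr_suml; apply: ler_sum => i _.
rewrite mxE; exact: cs.
Qed.


Lemma frob_ge0 m (A : 'M[R]_m) : 0 <= frob A.
Proof. exact: sqrtr_ge0. Qed.

Lemma mxnorm_le m (A : 'M[R]_m) x : vnorm (A *m x) <= mxnorm A * vnorm x.
Proof.
have [p0|pp] := eqVneq (vnorm x) 0.
  by rewrite p0 mulr0; have := mx_bound A x; rewrite p0 mulr0.
have xp : 0 < vnorm x by rewrite lt_def pp vnorm_ge0.
set S := [set vnorm (A *m x) | x in [set x : 'cV[R]_m | vnorm x <= 1]].
have hS : has_ubound S.
  exists (frob A) => y [z /= hz <-].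
  apply: (le_trans (mx_bound A z)); rewrite -[leRHS]mulr1; apply: ler_wpM2l => //; exact: frob_ge0.
have e1 : vnorm ((vnorm x)^-1 *: x) = 1 by rewrite vnormZ ger0_norm ?invr_ge0 ?vnorm_ge0 // mulVf.
have h : vnorm (A *m ((vnorm x)^-1 *: x)) <= mxnorm A.
  by apply: (ub_le_sup hS); exists ((vnorm x)^-1 *: x) => //=; rewrite e1.
move: h; rewrite -scalemxAr vnormZ ger0_norm ?invr_ge0 ?vnorm_ge0 // => h.
by rewrite -ler_pdivrMr // mulrC.
Qed.

Lemma smin_le m (A : 'M[R]_m) x : smin A * vnorm x <= vnorm (A *m x).
Proof.
have [p0|pp] := eqVneq (vnorm x) 0.
  by rewrite p0 mulr0 vnorm_ge0.
have xp : 0 < vnorm x by rewrite lt_def pp vnorm_ge0.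
set S := [set vnorm (A *m x) | x in [set x : 'cV[R]_m | vnorm x = 1]].
have hS : has_lbound S by exists 0 => y [z _ <-]; exact: vnorm_ge0.
have e1 : vnorm ((vnorm x)^-1 *: x) = 1 by rewrite vnormZ ger0_norm ?invr_ge0 ?vnorm_ge0 // mulVf.
have h : smin A <= vnorm (A *m ((vnorm x)^-1 *: x)).
  by apply: (ge_inf hS); exists ((vnorm x)^-1 *: x).
move: h; rewrite -scalemxAr vnormZ ger0_norm ?invr_ge0 ?vnorm_ge0 // => h.
by rewrite -ler_pdivlMr // mulrC.
Qed.

Lemma vnorm_delta m (i : 'I_m) : vnorm (delta_mx i ord0 : 'cV[R]_m) = 1.
Proof.
rewrite /vnorm (bigD1 i) //= big1 ?addr0 ?mxE ?eqxx ?expr1n ?sqrtr1 //.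
by move=> j /negbTE hj; rewrite mxE hj /= expr0n.
Qed.

Lemma entry_mx_le m (A : 'M[R]_m) i j : `|A i j| <= mxnorm A.
Proof.
have := entry_le (A *m delta_mx j ord0) i.
rewrite -colE mxE => h.
apply: (le_trans h).
by have := mxnorm_le A (delta_mx j ord0); rewrite vnorm_delta mulr1 -colE.
Qed.

Lemma posdef_unit m (A : 'M[R]_m) : posdef A -> A \in unitmx.
Proof.
move=> hA; rewrite unitmxE unitfE; apply/negP => /det0P [v v0 vA].
suff : v^T != 0 by move/hA; rewrite trmxK vA mul0mx mxE ltxx.
by apply: contra v0 => /eqP h; rewrite -(trmxK v) h trmx0.
Qed.

Lemma smin_gt0 m (A : 'M[R]_m) (i0 : 'I_m) : A \in unitmx -> 0 < smin A.
Proof.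
move=> uA.
have key : forall x : 'cV[R]_m, vnorm x = 1 -> 1 <= frob (invmx A) * vnorm (A *m x).
  by move=> x hx; rewrite -hx -{1}(mulKmx uA x); exact: mx_bound.
have fp : 0 < frob (invmx A).
  have := key _ (vnorm_delta i0); rewrite lt_def frob_ge0 andbT => h.
  by apply/eqP => e; move: h; rewrite e mul0r ler10.
apply: (@lt_le_trans _ _ (frob (invmx A))^-1); first by rewrite invr_gt0.
apply: lb_le_inf.
  by exists (vnorm (A *m delta_mx i0 ord0)); exists (delta_mx i0 ord0) => //; exact: vnorm_delta.
move=> y [x /= hx <-]; rewrite -[_^-1]mulr1 ler_pdivrMl //.
exact: key.
Qed.

End LA.
Section Exp.
Context (R : realType) (d : measure_display) (T : measurableType d) (P : probability T R).

Lemma exp_lim_le (I : finType) (g : nat -> I -> T -> R) (l c : I -> R) (D C : R) :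
  (forall k i, measurable_fun setT (g k i)) ->
  (forall k i w, `|g k i w| <= D) ->
  (forall i, ((fun k => 'E_P[g k i]) @ \oo --> (l i)%:E)%E) ->
  (forall k w, \sum_i c i * g k i w <= C) ->
  \sum_i c i * l i <= C.
Proof.
move=> hm hb hl hC.
have Lf : forall k i, g k i \in Lfun P 1.
  move=> k i; apply/Lfun1_integrable; apply: measurable_bounded_integrable => //.
  - exact: (le_lt_trans (probability_le1 P measurableT) (ltry 1)).
  - exists D; split; first exact: num_real.
    by move=> M DM x _; apply: le_trans (hb k i x) (ltW DM).
pose e k i := fine ('E_P[g k i])%E.
have Ee : forall k i, ('E_P[g k i] = (e k i)%:E)%E.
  by move=> k i; rewrite /e fineK // expectation_fin_num.
have hk : forall k, \sum_i c i * e k i <= C.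
  move=> k.
  pose F := [seq (c i \o* g k i) | i <- index_enum I].
  have FL : forall Xi, Xi \in F -> Xi \in Lfun P 1.
    move=> Xi /mapP [i _ ->]; have := @Lfun_scale _ _ _ P (g k i) (c i) 1 (lexx _) (Lf k i); exact.
  have fE : (fun w => \sum_i c i * g k i w) = \sum_(Xi <- F) Xi.
    have ev : forall (r : seq I) w, (\sum_(i <- r) (c i \o* g k i)) w = \sum_(i <- r) c i * g k i w.
      move=> r w; elim: r => [|i r IH]; rewrite ?big_nil ?big_cons; first reflexivity.
      rewrite -IH.
      by change ((c i \o* g k i) w + (\sum_(j <- r) c j \o* g k j) w = c i * g k i w + (\sum_(j <- r) c j \o* g k j) w); rewrite /= mulrC.
    by apply/funext => w; rewrite big_map ev.
  have Es : ('E_P[(fun w => \sum_i c i * g k i w)%R] = ((\sum_i c i * e k i)%R)%:E)%E.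
    rewrite fE expectation_sum // big_map -sumEFin; apply: eq_bigr => i _.
    by rewrite expectationZl ?Lf // Ee.
  have sL : (fun w => \sum_i c i * g k i w) \in Lfun P 1.
    by rewrite fE big_seq; apply: rpred_sum => Xi /FL.
  have h0 : (0 <= 'E_P[(cst C \- (fun w => \sum_i c i * g k i w))%R])%E.
    by apply: expectation_ge0 => w /=; rewrite subr_ge0.
  move: h0; rewrite expectationB ?Lfun_cst // expectation_cst Es -EFinB lee_fin subr_ge0.
  done.
have cvs : forall r : seq I, (fun k => \sum_(i <- r) c i * e k i) @ \oo --> \sum_(i <- r) c i * l i.
  elim=> [|i r IH].
    have -> : (fun k => \sum_(i <- [::]) c i * e k i) = fun _ => 0.
      by apply/funext => k; rewrite big_nil.
    rewrite big_nil; exact: cvg_cst.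
  have -> : (fun k => \sum_(j <- i :: r) c j * e k j) = (fun k => c i * e k i + \sum_(j <- r) c j * e k j).
    by apply/funext => k; rewrite big_cons.
  rewrite big_cons; apply: cvgD => //.
  apply: cvgMl_tmp.
  exact: (fine_cvg (hl i)).
have cv := cvs (index_enum I).
rewrite leNgt; apply/negP => hlt.
have := cvgr_gt _ cv _ hlt.
case=> N _ /(_ N (leqnn N)) /=.
by rewrite ltNge hk.
Qed.

End Exp.

Section Lim.
Context (R : realType) (d : measure_display) (T : measurableType d) (P : probability T R).

Lemma dot_mx m (v y : 'cV[R]_m) (M : 'M[R]_m) :
  dot v (M *m y) = \sum_(pq : 'I_m * 'I_m) (v pq.1 ord0 * y pq.2 ord0) * M pq.1 pq.2.
Proof.
rewrite /dot -(pair_big xpredT xpredT (fun p q => (v p ord0 * y q ord0) * M p q)) /=.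
apply: eq_bigr => p _; rewrite mxE mulr_sumr; apply: eq_bigr => q _; ring.
Qed.

Lemma mat_lim_bound m (S : Type) (xi : nat -> T -> S) (F : S -> 'M[R]_m) (Ab : 'M[R]_m) :
  (forall k p q, measurable_fun setT (fun w => F (xi k w) p q)) ->
  (forall p q, ((fun k => 'E_P[fun w => F (xi k w) p q]) @ \oo --> (Ab p q)%:E)%E) ->
  (forall s, mxnorm (F s) <= 1/4) ->
  forall y, vnorm (Ab *m y) <= vnorm y / 4.
Proof.
move=> hm hl hF y; set v := Ab *m y.
have h : \sum_(pq : 'I_m * 'I_m) (v pq.1 ord0 * y pq.2 ord0) * Ab pq.1 pq.2 <= vnorm v * (vnorm y / 4).
  apply: (@exp_lim_le R d T P _ (fun k pq w => F (xi k w) pq.1 pq.2) _ _ (1/4)).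
  - by move=> k pq; exact: hm.
  - by move=> k pq w; apply: le_trans (entry_mx_le _ _ _) (hF _).
  - by move=> pq; exact: hl.
  - move=> k w; rewrite -dot_mx; apply: le_trans (dot_le _ _) _.
    apply: ler_wpM2l; first exact: vnorm_ge0.
    apply: le_trans (mxnorm_le _ _) _.
    rewrite [leRHS]mulrC; apply: ler_wpM2r; first exact: vnorm_ge0.
    by have := hF (xi k w); rewrite div1r.
rewrite -dot_mx /v dot_self in h.
have [v0|vp] := eqVneq (vnorm v) 0; first by rewrite v0 divr_ge0 ?vnorm_ge0.
have vpos : 0 < vnorm v by rewrite lt_def vp vnorm_ge0.
by rewrite expr2 ler_pM2l // in h.
Qed.

Lemma vec_lim_bound m (S : Type) (xi : nat -> T -> S) (F : S -> 'cV[R]_m) (bb : 'cV[R]_m) (B : R) : 0 <= B ->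
  (forall k p, measurable_fun setT (fun w => F (xi k w) p ord0)) ->
  (forall p, ((fun k => 'E_P[fun w => F (xi k w) p ord0]) @ \oo --> (bb p ord0)%:E)%E) ->
  (forall s, vnorm (F s) <= B) ->
  vnorm bb <= B.
Proof.
move=> hB hm hl hF.
have h : \sum_(p : 'I_m) bb p ord0 * bb p ord0 <= vnorm bb * B.
  apply: (@exp_lim_le R d T P _ (fun k p w => F (xi k w) p ord0) _ _ B).
  - by move=> k p; exact: hm.
  - by move=> k p w; apply: le_trans (entry_le _ _) (hF _).
  - by move=> p; exact: hl.
  - move=> k w; apply: le_trans (dot_le _ _) _.
    by apply: ler_wpM2l; [exact: vnorm_ge0 | exact: hF].
move: h; rewrite -/(dot bb bb) dot_self => h.
have [v0|vp] := eqVneq (vnorm bb) 0.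
  by rewrite v0.
have vpos : 0 < vnorm bb by rewrite lt_def vp vnorm_ge0.
by rewrite expr2 ler_pM2l // in h.
Qed.

End Lim.
Section Arith.
Variable R : realType.

Lemma arith_main (L u a Z B Ys V d r q : R) : 0 < L -> u = L^-1 -> 4 <= u -> 0 <= a -> 0 <= Z -> 0 <= B -> 0 <= Ys ->
  0 <= r -> r <= 2 * q ->
  V <= (2 + u / 4) * Z + 4 * B + u * B + (1 + u / 4) * Ys ->
  d <= a / 2 * (2 + u / 4) * (r * V) ->
  d <= q * (8 * L + 1) ^+ 2 / (8 * L ^+ 2) * a * Z + q * (8 * L + 1) ^+ 2 * (2 * B + Ys) / (8 * L ^+ 3) * a.
Proof.
move=> L0 hu u4 a0 Z0 B0 Y0 r0 rq hV hd.
have Ln : L != 0 by rewrite gt_eqF.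
have e1 : q * (8 * L + 1) ^+ 2 / (8 * L ^+ 2) = q * ((8 + u) ^+ 2 / 8) by rewrite hu; field.
have e2 : q * (8 * L + 1) ^+ 2 * (2 * B + Ys) / (8 * L ^+ 3) = q * ((8 + u) ^+ 2 * u * (2 * B + Ys) / 8) by rewrite hu; field.
rewrite e1 e2.
apply: (le_trans hd).
set Vb := (2 + u / 4) * Z + 4 * B + u * B + (1 + u / 4) * Ys.
have u0 : 0 <= u by lra.
have Vb0 : 0 <= Vb.
  rewrite /Vb; have := mulr_ge0 u0 B0; have := mulr_ge0 u0 Y0; have := mulr_ge0 u0 Z0; nra.
have F0 : 0 <= a * (8 + u) / 8 by apply: divr_ge0 => //; apply: mulr_ge0 => //; lra.
have hV' : r * V <= r * Vb by apply: ler_wpM2l.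
have h2 : 2 * Vb <= (8 + u) * (Z + u * (2 * B + Ys)).
  rewrite /Vb; have := mulr_ge0 u0 B0; have := mulr_ge0 u0 Y0; have := mulr_ge0 u0 Z0.
  have := mulr_ge0 (mulr_ge0 u0 u0) B0; have := mulr_ge0 (mulr_ge0 u0 u0) Y0; nra.
have q0 : 0 <= q by lra.
have h3 : r * Vb <= q * ((8 + u) * (Z + u * (2 * B + Ys))).
  apply: (@le_trans _ _ (q * (2 * Vb))); last by apply: ler_wpM2l.
  rewrite mulrA; apply: ler_wpM2r => //; lra.
have e3 : a / 2 * (2 + u / 4) * (r * V) = a * (8 + u) / 8 * (r * V) by field.
have e4 : q * ((8 + u) ^+ 2 / 8) * a * Z + q * ((8 + u) ^+ 2 * u * (2 * B + Ys) / 8) * a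
   = a * (8 + u) / 8 * (q * ((8 + u) * (Z + u * (2 * B + Ys)))) by field.
rewrite e3 e4; apply: ler_wpM2l => //.
exact: le_trans hV' h3.
Qed.

Lemma arith3 (L a Z c K d : R) : 0 < L -> 0 <= d ->
  0 <= 3 * c / (8 * L ^+ 2) * a * Z -> 0 <= 3 * c * K / (8 * L ^+ 3) * a ->
  d <= 3 * c / (8 * L ^+ 2) * a * Z + 3 * c * K / (8 * L ^+ 3) * a ->
  d ^+ 2 <= 9 * c ^+ 2 / (32 * L ^+ 4) * a ^+ 2 * Z ^+ 2 + 9 * c ^+ 2 * K ^+ 2 / (32 * L ^+ 6) * a ^+ 2.
Proof.
move=> L0 d0; set P := 3 * c / _ * a * Z; set Q := 3 * c * K / _ * a => P0 Q0 hd.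
have Ln : L != 0 by rewrite gt_eqF.
have h1 : d ^+ 2 <= (P + Q) ^+ 2 by rewrite !expr2; apply: ler_pM.
have h2 : (P + Q) ^+ 2 <= 2 * P ^+ 2 + 2 * Q ^+ 2.
  by rewrite sqrrD; have := sqr_ge0 (P - Q); rewrite sqrrB; lra.
have h := le_trans h1 h2.
apply: (le_trans h); rewrite le_eqVlt; apply/orP; left; apply/eqP; rewrite /P /Q; field.
exact: Ln.
Qed.
End Arith.

Lemma subrACA' (V : zmodType) (x y z t : V) : (x - y) - (z - t) = (x - z) - (y - t).
Proof. by rewrite !opprD !opprK addrACA. Qed.

Lemma vnorm0 (R : realType) m : vnorm (0 : 'cV[R]_m) = 0.
Proof. by rewrite /vnorm big1 ?sqrtr0 // => i _; rewrite mxE expr0n. Qed.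

Lemma ln2_le1 (R : realType) : ln (2 : R) <= 1.
Proof.
have h : (2 : R) <= expR 1 by have := @expR_ge1Dx R 1.
by rewrite -[leRHS](expRK 1) ler_ln ?posrE ?expR_gt0.
Qed.

Lemma vnorm_le_sub (R : realType) m (u v : 'cV[R]_m) : vnorm u <= vnorm v + vnorm (v - u).
Proof.
rewrite -{1}(subrK v u); apply: le_trans (vnormD (u - v) v) _.
by rewrite vnormBC addrC.
Qed.

Unset Implicit Arguments.
Theorem lemma10
  (R : realType) (n : nat) (hn : (1 <= n)%N)
  (* probability space and the (Markov) process xi_k with state space S *)
  (dO : measure_display) (Omega : measurableType dO) (P : probability Omega R)
  (S : Type) (xi : nat -> Omega -> S)
  (A11 A12 A21 A22 : S -> 'M[R]_n) (b1 b2 : S -> 'cV[R]_n)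
  (Ab11 Ab12 Ab21 Ab22 : 'M[R]_n) (bb1 bb2 : 'cV[R]_n)
  (* measurability of the entries of A_ij(xi_k), b_i(xi_k) *)
  (hmA : forall k (p q : 'I_n),
     [/\ measurable_fun setT (fun w => A11 (xi k w) p q),
         measurable_fun setT (fun w => A12 (xi k w) p q),
         measurable_fun setT (fun w => A21 (xi k w) p q) &
         measurable_fun setT (fun w => A22 (xi k w) p q)])
  (hmb : forall k (p : 'I_n),
     measurable_fun setT (fun w => b1 (xi k w) p ord0) /\
     measurable_fun setT (fun w => b2 (xi k w) p ord0))
  (* Abar_ij = lim_k E[A_ij(xi_k)], bbar_i = lim_k E[b_i(xi_k)] (entrywise) *)
  (hAb : forall p q : 'I_n,
     [/\ ((fun k => 'E_P[fun w => A11 (xi k w) p q]) @ \oo --> (Ab11 p q)%:E)%E,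
         ((fun k => 'E_P[fun w => A12 (xi k w) p q]) @ \oo --> (Ab12 p q)%:E)%E,
         ((fun k => 'E_P[fun w => A21 (xi k w) p q]) @ \oo --> (Ab21 p q)%:E)%E &
         ((fun k => 'E_P[fun w => A22 (xi k w) p q]) @ \oo --> (Ab22 p q)%:E)%E])
  (hbb : forall p : 'I_n,
     ((fun k => 'E_P[fun w => b1 (xi k w) p ord0]) @ \oo --> (bb1 p ord0)%:E)%E /\
     ((fun k => 'E_P[fun w => b2 (xi k w) p ord0]) @ \oo --> (bb2 p ord0)%:E)%E)
  (* positive definiteness of Abar11 and of the Schur complement Delta *)
  (hA11pd : posdef Ab11)
  (hDpd : posdef (Ab22 - Ab21 *m invmx Ab11 *m Ab12))
  (* (A2) *)
  (B : R) (hB : 0 < B)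
  (hA2b : forall s, vnorm (b1 s) <= B /\ vnorm (b2 s) <= B)
  (hA2A : forall s, [/\ mxnorm (A11 s) <= 1/4, mxnorm (A12 s) <= 1/4,
                        mxnorm (A21 s) <= 1/4 & mxnorm (A22 s) <= 1/4])
  (* the solution Xs, Ys of the averaged linear system *)
  (Xs Ys : 'cV[R]_n)
  (hsol1 : Ab11 *m Xs + Ab12 *m Ys = bb1)
  (hsol2 : Ab21 *m Xs + Ab22 *m Ys = bb2)
  (* step sizes: nonnegative, nonincreasing, beta_k <= alpha_k *)
  (alpha beta : nat -> R)
  (ha0 : forall k, 0 <= alpha k) (hb0 : forall k, 0 <= beta k)
  (hanin : forall k, alpha k.+1 <= alpha k)
  (hbnin : forall k, beta k.+1 <= beta k)
  (hba : forall k, beta k <= alpha k)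
  (* mixing time function and K* *)
  (tau : R -> nat) (Kstar : nat) (hK0 : (0 < Kstar)%N)
  (hK : forall k, (Kstar <= k)%N ->
     [/\ (tau (alpha k) <= k)%N,
         \sum_(k - tau (alpha k) <= t < k.+1) alpha t
           <= (tau (alpha k))%:R * alpha (k - tau (alpha k))%N &
         (tau (alpha k))%:R * alpha (k - tau (alpha k))%N <= ln 2])
  (* the iterates *)
  (X Y : nat -> Omega -> 'cV[R]_n)
  (hX : forall k w, X k.+1 w = X k w - alpha k *:
        (A11 (xi k w) *m X k w + A12 (xi k w) *m Y k w - b1 (xi k w)))
  (hY : forall k w, Y k.+1 w = Y k w - beta k *:
        (A21 (xi k w) *m X k w + A22 (xi k w) *m Y k w - b2 (xi k w))) :
  let lam1 := smin Ab11 in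
  let Zh := fun k w => col_mx (X k w - invmx Ab11 *m (bb1 - Ab12 *m Y k w))
                              (Y k w - Ys) in
  let c := (8 * lam1 + 1) ^+ 2 in
  let K := 2 * B + vnorm Ys in
  forall k w, (Kstar <= k)%N ->
  let t := tau (alpha k) in
  let a := alpha_win alpha k t in
  let d := vnorm (Zh k w - Zh (k - t)%N w) in
  [/\ d <= c / (8 * lam1 ^+ 2) * a * vnorm (Zh (k - t)%N w)
           + c * K / (8 * lam1 ^+ 3) * a,
      d <= 3 * c / (8 * lam1 ^+ 2) * a * vnorm (Zh k w)
           + 3 * c * K / (8 * lam1 ^+ 3) * a &
      d ^+ 2 <= 9 * c ^+ 2 / (32 * lam1 ^+ 4) * a ^+ 2 * vnorm (Zh k w) ^+ 2
           + 9 * c ^+ 2 * K ^+ 2 / (32 * lam1 ^+ 6) * a ^+ 2].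
Proof.
move=> lam1 Zh c K k w hk t a d.
have hAu : Ab11 \in unitmx := posdef_unit hA11pd.
pose i0 : 'I_n := Ordinal hn.
have hlam : 0 < lam1 := smin_gt0 i0 hAu.
have nA11 : forall y, vnorm (Ab11 *m y) <= vnorm y / 4.
  apply: (@mat_lim_bound R dO Omega P n S xi A11).
  - by move=> k' p q; case: (hmA k' p q).
  - by move=> p q; case: (hAb p q).
  - by move=> s; case: (hA2A s).
have nA12 : forall y, vnorm (Ab12 *m y) <= vnorm y / 4.
  apply: (@mat_lim_bound R dO Omega P n S xi A12).
  - by move=> k' p q; case: (hmA k' p q).
  - by move=> p q; case: (hAb p q).
  - by move=> s; case: (hA2A s).
have nbb1 : vnorm bb1 <= B.
  apply: (@vec_lim_bound R dO Omega P n S xi b1 bb1 B (ltW hB)).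
  - by move=> k' p; case: (hmb k' p).
  - by move=> p; case: (hbb p).
  - by move=> s; case: (hA2b s).
have hlam4 : lam1 <= 1 / 4.
  have := smin_le Ab11 (delta_mx i0 ord0); rewrite vnorm_delta mulr1 => h.
  by apply: le_trans h _; have := nA11 (delta_mx i0 ord0); rewrite vnorm_delta.
set u := lam1^-1.
have hu4 : 4 <= u by rewrite /u -div1r ler_pdivlMr //; lra.
have u0 : 0 <= u by lra.
have hM : forall y, vnorm (invmx Ab11 *m y) <= u * vnorm y.
  move=> y; have := smin_le Ab11 (invmx Ab11 *m y).
  by rewrite mulmxA mulmxV // mul1mx => h; rewrite /u ler_pdivlMl.
have gen : forall A : 'M[R]_n, mxnorm A <= 1 / 4 -> forall x, vnorm (A *m x) <= vnorm x / 4.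
  move=> A hA x; apply: le_trans (mxnorm_le A x) _.
  rewrite mulrC; apply: ler_wpM2l; first exact: vnorm_ge0.
  by move: hA; rewrite div1r.
pose xn t' := vnorm (X t' w).
pose yn t' := vnorm (Y t' w).
pose W t' := xn t' + yn t' + 4 * B.
have W0 : forall t', 0 <= W t'.
  by move=> t'; rewrite /W /xn /yn; have := vnorm_ge0 (X t' w); have := vnorm_ge0 (Y t' w); lra.
have Vb : forall t', [/\ vnorm (A11 (xi t' w) *m X t' w + A12 (xi t' w) *m Y t' w - b1 (xi t' w)) <= W t' / 4 &
    vnorm (A21 (xi t' w) *m X t' w + A22 (xi t' w) *m Y t' w - b2 (xi t' w)) <= W t' / 4].
  move=> t'; case: (hA2A (xi t' w)) => h11 h12 h21 h22; case: (hA2b (xi t' w)) => hb1 hb2.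
  split.
    apply: le_trans (vnormB _ _) _; apply: le_trans (lerD (vnormD _ _) (lexx _)) _.
    have := gen _ h11 (X t' w); have := gen _ h12 (Y t' w); rewrite /W /xn /yn; lra.
  apply: le_trans (vnormB _ _) _; apply: le_trans (lerD (vnormD _ _) (lexx _)) _.
  have := gen _ h21 (X t' w); have := gen _ h22 (Y t' w); rewrite /W /xn /yn; lra.
have dX : forall t', vnorm (X t'.+1 w - X t' w) <= alpha t' * (W t' / 4).
  move=> t'; rewrite hX addrAC subrr add0r vnormN vnormZ ger0_norm //.
  apply: ler_wpM2l => //; by case: (Vb t').
have dY : forall t', vnorm (Y t'.+1 w - Y t' w) <= alpha t' * (W t' / 4).
  move=> t'; rewrite hY addrAC subrr add0r vnormN vnormZ ger0_norm //.
  apply: (@le_trans _ _ (beta t' * (W t' / 4))).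
    apply: ler_wpM2l => //; by case: (Vb t').
  by apply: ler_wpM2r => //; apply: divr_ge0 => //.
have upX : forall t', xn t'.+1 <= xn t' + vnorm (X t'.+1 w - X t' w).
  move=> t'; rewrite /xn addrC; rewrite -{1}(subrK (X t' w) (X t'.+1 w)); exact: vnormD.
have upY : forall t', yn t'.+1 <= yn t' + vnorm (Y t'.+1 w - Y t' w).
  move=> t'; rewrite /yn addrC; rewrite -{1}(subrK (Y t' w) (Y t'.+1 w)); exact: vnormD.
have dnX : forall t', xn t' <= xn t'.+1 + vnorm (X t'.+1 w - X t' w).
  by move=> t'; exact: vnorm_le_sub.
have dnY : forall t', yn t' <= yn t'.+1 + vnorm (Y t'.+1 w - Y t' w).
  by move=> t'; exact: vnorm_le_sub.
have Wup : forall t', W t'.+1 <= W t' + alpha t' * W t' / 2.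
  move=> t'; have := upX t'; have := upY t'; have := dX t'; have := dY t'; rewrite /W; lra.
have Wdn : forall t', W t' <= W t'.+1 + alpha t' * W t' / 2.
  move=> t'; have := dnX t'; have := dnY t'; have := dX t'; have := dY t'; rewrite /W; lra.
have [htk hsum hln] := hK k hk.
rewrite -/t in htk hsum hln.
pose m := (k - t)%N.
have hmk : (m + t = k)%N by rewrite /m subnK.
pose Ssum j := \sum_(m <= s < m + j) alpha s.
have Sa : Ssum t = a by rewrite /Ssum hmk.
have Sge0 : forall j, 0 <= Ssum j by move=> j; apply: sumr_ge0 => s _.
have SS : forall j, Ssum j.+1 = Ssum j + alpha (m + j)%N.
  by move=> j; rewrite /Ssum addnS big_nat_recr //= leq_addr.
have Sle : forall j, (j <= t)%N -> Ssum j <= a.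
  move=> j hj; rewrite -Sa /Ssum [X in _ <= X](@big_cat_nat _ _ _ (m + j)%N) /=; last 2 first.
  - exact: leq_addr.
  - by rewrite leq_add2l.
  by rewrite lerDl; apply: sumr_ge0.
have a1 : a <= 1.
  have h1 : a <= \sum_(k - t <= s < k.+1) alpha s.
    by rewrite big_nat_recr /= ?leq_subr // lerDl.
  by apply: (le_trans h1); apply: (le_trans hsum); apply: (le_trans hln); exact: ln2_le1.
have a0 : 0 <= a by rewrite -Sa.
have IA : forall j, (j <= t)%N -> W (m + j)%N <= W m * (1 + Ssum j).
  elim=> [_|j IH hj].
    by rewrite addn0 /Ssum addn0 big_geq // addr0 mulr1.
  have hj' : (j <= t)%N := ltnW hj.
  have IH' := IH hj'.
  have S1 : Ssum j <= 1 := le_trans (Sle j hj') a1.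
  have P0 := mulr_ge0 (W0 m) (ha0 (m + j)%N).
  have := Wup (m + j)%N; rewrite SS addnS => hW.
  have := W0 m; have := ha0 (m + j)%N; have := Sge0 j; nra.
have Wm2 : forall j, (j <= t)%N -> W (m + j)%N <= 2 * W m.
  move=> j hj; have := IA j hj; have := Sle j hj; have := W0 m; have := Sge0 j; nra.
have IC : forall j, (j <= t)%N -> vnorm (X (m + j)%N w - X m w) <= Ssum j * W m / 2 /\
    vnorm (Y (m + j)%N w - Y m w) <= Ssum j * W m / 2.
  elim=> [_|j IH hj].
    by rewrite addn0 !subrr vnorm0 /Ssum addn0 big_geq // !mul0r.
  have hj' : (j <= t)%N := ltnW hj.
  have [IHx IHy] := IH hj'.
  have hw : alpha (m + j)%N * W (m + j)%N <= alpha (m + j)%N * (2 * W m).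
    by apply: ler_wpM2l => //; exact: Wm2.
  rewrite SS addnS; split.
    rewrite -(subrK (X (m + j)%N w) (X (m + j).+1 w)) -addrA.
    apply: le_trans (vnormD _ _) _.
    have := dX (m + j)%N; lra.
  rewrite -(subrK (Y (m + j)%N w) (Y (m + j).+1 w)) -addrA.
  apply: le_trans (vnormD _ _) _.
  have := dY (m + j)%N; lra.
have IB : forall j, (j <= t)%N -> W m * (1 - Ssum j / 2) <= W (m + j)%N.
  elim=> [_|j IH hj].
    by rewrite addn0 /Ssum addn0 big_geq // mul0r subr0 mulr1.
  have hj' : (j <= t)%N := ltnW hj.
  have IH' := IH hj'.
  have S1 : Ssum j.+1 <= 1 := le_trans (Sle _ hj) a1.
  rewrite SS in S1.
  have P0 := mulr_ge0 (W0 m) (ha0 (m + j)%N).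
  have := Wdn (m + j)%N; rewrite SS addnS => hW.
  have := W0 m; have := ha0 (m + j)%N; have := Sge0 j; nra.
have [DX DY] : vnorm (X k w - X m w) <= a * W m / 2 /\ vnorm (Y k w - Y m w) <= a * W m / 2.
  by have := IC t (leqnn t); rewrite hmk Sa.
have Wmk : W m <= 2 * W k.
  have := IB t (leqnn t); rewrite hmk Sa => h; have := W0 m; nra.
have WZ : forall t', W t' <= (2 + u / 4) * vnorm (Zh t' w) + 4 * B + u * B + (1 + u / 4) * vnorm Ys.
  move=> t'.
  set p := invmx Ab11 *m (bb1 - Ab12 *m Y t' w).
  have zx : vnorm (X t' w - p) <= vnorm (Zh t' w) := vnorm_col_u _ _.
  have zy : vnorm (Y t' w - Ys) <= vnorm (Zh t' w) := vnorm_col_d _ _.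
  have hy : yn t' <= vnorm (Y t' w - Ys) + vnorm Ys.
    by rewrite /yn -{1}(subrK Ys (Y t' w)); exact: vnormD.
  have hx : xn t' <= vnorm (X t' w - p) + vnorm p.
    by rewrite /xn -{1}(subrK p (X t' w)); exact: vnormD.
  have hp : vnorm p <= u * (B + yn t' / 4).
    apply: le_trans (hM _) _; apply: ler_wpM2l => //.
    apply: le_trans (vnormB _ _) _; apply: lerD => //; exact: nA12.
  have hu2 : u * yn t' <= u * (vnorm (Zh t' w) + vnorm Ys).
    by apply: ler_wpM2l => //; apply: (le_trans hy); apply: lerD.
  rewrite /W; lra.
have hd : d <= vnorm (X k w - X m w) + u * (vnorm (Y k w - Y m w) / 4) + vnorm (Y k w - Y m w).
  rewrite /d /Zh -/m opp_col_mx add_col_mx.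
  apply: le_trans (vnorm_col_le _ _) _.
  rewrite subrACA' [Y k w - Ys - _]subrACA' subrr subr0.
  apply: lerD => //.
  apply: le_trans (vnormB _ _) _; apply: lerD => //.
  rewrite -mulmxBr subrACA' subrr sub0r.
  apply: le_trans (hM _) _; apply: ler_wpM2l => //.
  by rewrite vnormN -mulmxBr; exact: nA12.
have hd1 : d <= a / 2 * (2 + u / 4) * (1 * W m).
  have := ler_wpM2l u0 DY; lra.
have hd2 : d <= a / 2 * (2 + u / 4) * (2 * W k).
  apply: (le_trans hd1); apply: ler_wpM2l; last by rewrite mul1r.
  apply: mulr_ge0; [apply: divr_ge0 => // | lra].
have B0 : 0 <= B := ltW hB.
have Ys0 := vnorm_ge0 Ys.
have i1 : d <= c / (8 * lam1 ^+ 2) * a * vnorm (Zh (k - t)%N w) + c * K / (8 * lam1 ^+ 3) * a.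
  have r1 : (1:R) <= 2 * 1 by lra.
  have := @arith_main R lam1 u a (vnorm (Zh (k - t)%N w)) B (vnorm Ys) (W m) d 1 1 hlam erefl hu4 a0
    (vnorm_ge0 _) B0 Ys0 ler01 r1 (WZ m) hd1.
  by rewrite !mul1r.
have i2 : d <= 3 * c / (8 * lam1 ^+ 2) * a * vnorm (Zh k w) + 3 * c * K / (8 * lam1 ^+ 3) * a.
  have r1 : (2:R) <= 2 * 3 by lra.
  have r0 : (0:R) <= 2 by lra.
  have := @arith_main R lam1 u a (vnorm (Zh k w)) B (vnorm Ys) (W k) d 2 3 hlam erefl hu4 a0
    (vnorm_ge0 _) B0 Ys0 r0 r1 (WZ k) hd2.
  by [].
have c0 : 0 <= c := sqr_ge0 _.
have K0 : 0 <= K by rewrite /K; apply: addr_ge0 => //; apply: mulr_ge0.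
have P0 : 0 <= 3 * c / (8 * lam1 ^+ 2) * a * vnorm (Zh k w).
  apply: mulr_ge0; last exact: vnorm_ge0.
  apply: mulr_ge0 => //; apply: divr_ge0; first by apply: mulr_ge0.
  by apply: mulr_ge0 => //; apply: exprn_ge0; exact: ltW.
have Q0 : 0 <= 3 * c * K / (8 * lam1 ^+ 3) * a.
  apply: mulr_ge0 => //; apply: divr_ge0; first by apply: mulr_ge0 => //; apply: mulr_ge0.
  by apply: mulr_ge0 => //; apply: exprn_ge0; exact: ltW.
split => //.
exact: (@arith3 R lam1 a (vnorm (Zh k w)) c K d hlam (vnorm_ge0 _) P0 Q0 i2).
Qed.
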